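(* Let $A$ be a homothetically shrinking soliton centered at $(x_0,t_0)$ such that $i_VF=0$ for some non-zero vector $V\in\mathbb R^n$. Then $A$ descends to the hyperplane perpendicular to $V$: in an exponential gauge (one with $(x-x_0)^jA_j(x)=0$), one has $V^jA_j\equiv0$ and $A_j(x+cV)=A_j(x)$ for all $x\in\mathbb R^n$, $c\in\mathbb R$ and all $j$, so that $A$ is a connection on a trivial $G$-vector bundle over the hyperplane $V^\perp$ pulled back along the orthogonal projection.
   Context: $G\subset SO(r)$ compact with Lie algebra $\mathfrak g$; $E$ the trivial $G$-vector bundle over $\mathbb R^n$. Connection $A=A_idx^i$, curvature $F_{ij}=\partial_iA_j-\partial_jA_i+[A_i,A_j]$; repeated indices summed; $\nabla_pT=\partial_pT+[A_p,T]$; $i_VF=V^pF_{pj}dx^j$. A homothetically shrinking soliton centered at $(x_0,t_0)$ satisfies $\nabla_pF_{pj}-\frac1{2t_0}(x-x_0)^pF_{pj}=0$ for all $j$. *)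

(* Defs.v *)
From HB Require Import structures.
From mathcomp Require Import all_boot all_order all_algebra.
From mathcomp Require Import all_classical all_reals all_analysis.
Set Implicit Arguments. Unset Strict Implicit. Unset Printing Implicit Defensive.
Import Order.TTheory GRing.Theory Num.Theory.
Import numFieldNormedType.Exports.
Local Open Scope ring_scope.
Local Open Scope classical_set_scope.

Definition xcoord {R : realType} {n : nat} (x : 'rV[R]_n) (j : 'I_n) : R := x ord0 j.

Definition ebasis {R : realType} {n : nat} (j : 'I_n) : 'rV[R]_n := delta_mx ord0 j.

Definition pd {R : realType} {n r : nat} (j : 'I_n) (f : 'rV[R]_n -> 'M[R]_r)
  (x : 'rV[R]_n) : 'M[R]_r := derive f x (ebasis j).

Fixpoint iter_pd {R : realType} {n r : nat} (js : seq 'I_n)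
  (f : 'rV[R]_n -> 'M[R]_r) : 'rV[R]_n -> 'M[R]_r :=
  match js with
  | [::] => f
  | j :: js' => pd j (iter_pd js' f)
  end.

Definition smooth {R : realType} {n r : nat} (f : 'rV[R]_n -> 'M[R]_r) : Prop :=
  forall (js : seq 'I_n) (x : 'rV[R]_n), differentiable (iter_pd js f) x.

Definition lie {R : realType} {r : nat} (X Y : 'M[R]_r) : 'M[R]_r :=
  X *m Y - Y *m X.

(* G is a compact (i.e. closed) subgroup of SO(r) *)
Definition closed_subgroup_SO {R : realType} (r : nat) (G : set 'M[R]_r) : Prop :=
  [/\ closed G, G 1%:M,
      (forall g h, G g -> G h -> G (g *m h)),
      (forall g, G g -> G (invmx g)) &
      (forall g, G g -> g *m g^T = 1%:M /\ \det g = 1)].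

Definition lie_algebra {R : realType} {r : nat} (G : set 'M[R]_r) : set 'M[R]_r :=
  [set X | exists gam : R -> 'M[R]_r,
     [/\ (forall t, G (gam t)), gam 0 = 1%:M,
         (forall t, differentiable gam t) & derive gam 0 1 = X]].

(* A connection A = A_i dx^i on the trivial bundle over R^n: A i : R^n -> M_r *)
Definition connection (R : realType) (n r : nat) := 'I_n -> 'rV[R]_n -> 'M[R]_r.

Definition curvature {R : realType} {n r : nat} (A : connection R n r)
  (i j : 'I_n) (x : 'rV[R]_n) : 'M[R]_r :=
  pd i (A j) x - pd j (A i) x + lie (A i x) (A j x).

Definition covd {R : realType} {n r : nat} (A : connection R n r) (p : 'I_n)
  (T : 'rV[R]_n -> 'M[R]_r) (x : 'rV[R]_n) : 'M[R]_r :=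
  pd p T x + lie (A p x) (T x).

Definition shrinking_soliton {R : realType} {n r : nat} (A : connection R n r)
  (x0 : 'rV[R]_n) (t0 : R) : Prop :=
  forall (j : 'I_n) (x : 'rV[R]_n),
    \sum_(p < n) covd A p (curvature A p j) x
    - (2 * t0)^-1 *: \sum_(p < n) xcoord (x - x0) p *: curvature A p j x = 0.

Definition interior_curv {R : realType} {n r : nat} (A : connection R n r)
  (V : 'rV[R]_n) (j : 'I_n) (x : 'rV[R]_n) : 'M[R]_r :=
  \sum_(p < n) xcoord V p *: curvature A p j x.

Definition exponential_gauge {R : realType} {n r : nat} (A : connection R n r)
  (x0 : 'rV[R]_n) : Prop :=
  forall x, \sum_(j < n) xcoord (x - x0) j *: A j x = 0.

(* Main.v *)
Require Import Defs.
From HB Require Import structures.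
From mathcomp Require Import all_boot all_order all_algebra.
From mathcomp Require Import all_classical all_reals all_analysis.
Import Order.TTheory GRing.Theory Num.Theory.
Import numFieldNormedType.Exports.
Local Open Scope ring_scope.
Local Open Scope classical_set_scope.

Section H.
Variables (R : realType) (n r : nat).
Implicit Types (f F : 'rV[R]_n -> 'M[R]_r).

Lemma pdE f x v : differentiable f x ->
  'D_v f x = \sum_(i < n) v ord0 i *: pd i f x.
Proof.
move=> df; rewrite /pd deriveE // {1}(row_sum_delta v) linear_sum.
by apply: eq_bigr => i _; rewrite linearZ /= /ebasis deriveE.
Qed.

Lemma deriveZv f x k v : differentiable f x -> 'D_(k *: v) f x = k *: 'D_v f x.
Proof. by move=> df; rewrite !deriveE // linearZ. Qed.

Lemma line_diff (x y : 'rV[R]_n) (s : R) :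
  differentiable (fun s : R => x + s *: y) s.
Proof.
apply: differentiableD; first exact: differentiable_cst.
have [+ _] := is_diff_scalel s y; exact.
Qed.

Lemma derive_line F (x y : 'rV[R]_n) (s : R) : differentiable F (x + s *: y) ->
  differentiable (fun s : R => F (x + s *: y)) s /\
  'D_1 (fun s : R => F (x + s *: y)) s = 'D_y F (x + s *: y).
Proof.
move=> dF.
have dh := line_diff x y s.
have -> : (fun s : R => F (x + s *: y)) = F \o (fun s : R => x + s *: y) by [].
split; first exact: differentiable_comp.
rewrite deriveE; last exact: differentiable_comp.
rewrite diff_comp //=.
have [d1 d2] := is_diff_scalel s y.
have hy : 'd (fun s0 : R => x + s0 *: y) s 1 = y.
  rewrite -deriveE //.
  have -> : (fun s0 : R => x + s0 *: y) = cst x + ( *:%R^~ y) by [].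
  rewrite deriveD; last 2 first.
  - exact: derivable_cst.
  - exact: diff_derivable.
  by rewrite derive_cst add0r deriveE // d2 scale1r.
by rewrite hy deriveE.
Qed.

Lemma entry_line F x y (s : R) i k : differentiable F (x + s *: y) ->
  derivable (fun s : R => F (x + s *: y) i k) s 1 /\
  'D_1 (fun s : R => F (x + s *: y) i k) s = 'D_y F (x + s *: y) i k.
Proof.
move=> dF; have [d1 d2] := derive_line F x y s dF.
have db : derivable (fun s : R => F (x + s *: y)) s 1 by apply: diff_derivable.
split; first exact: (proj1 (derivable_mxP _ _ _) db).
by rewrite -d2 (derive_mx db) mxE.
Qed.

Lemma line_const F x y : (forall z, differentiable F z) ->
  (forall s : R, 'D_y F (x + s *: y) = 0) -> forall c : R, F (x + c *: y) = F x.
Proof.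
move=> dF h0 c; apply/matrixP => i k.
have := @is_derive_0_is_cst R (fun s : R => F (x + s *: y) i k) c 0.
rewrite scale0r addr0; apply => s.
have [d1 d2] := entry_line F x y s i k (dF (x + s *: y)).
by apply: DeriveDef => //; rewrite d2 h0 mxE.
Qed.

Lemma line_zero F x y : (forall z, differentiable F z) ->
  (forall s : R, F (x + s *: y) + 'D_(s *: y) F (x + s *: y) = 0) -> F (x + y) = 0.
Proof.
move=> dF h0; apply/matrixP => i k.
suff : (1 : R) * F (x + 1 *: y) i k = 0 * F (x + 0 *: y) i k.
  by rewrite mul0r scale1r mul1r mxE.
apply: (@is_derive_0_is_cst R (fun s : R => s * F (x + s *: y) i k)) => s.
have [d1 d2] := entry_line F x y s i k (dF (x + s *: y)).
have -> : (fun s : R => s * F (x + s *: y) i k) =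
   (id : R -> R) * (fun s : R => F (x + s *: y) i k) by [].
apply: DeriveDef; first exact: derivableM.
rewrite deriveM // d2 derive_id /=.
have H := h0 s; rewrite deriveZv in H; last exact: dF.
move/matrixP: H => /(_ i k); rewrite !mxE => <-.
rewrite addrC; congr (_ + _).
by rewrite /GRing.scale /= mulr1.
Qed.


Lemma deriveZfun (c : 'rV[R]_n -> R) (M : 'rV[R]_n -> 'M[R]_r) z v :
  derivable c z v -> derivable M z v ->
  derivable (fun z => c z *: M z) z v /\
  'D_v (fun z => c z *: M z) z = c z *: 'D_v M z + 'D_v c z *: M z.
Proof.
move=> dc dM.
have E i k : (fun z => (c z *: M z) i k) = c * (fun z => M z i k).
  by apply/funext => t; rewrite mxE.
have dMe i k : derivable (fun z => M z i k) z v by exact: (proj1 (derivable_mxP _ _ _) dM).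
have dd : derivable (fun z => c z *: M z) z v.
  by apply/derivable_mxP => i k; rewrite E; apply: derivableM.
split => //; apply/matrixP => i k.
rewrite (derive_mx dd) (derive_mx dM) !mxE E deriveM //.
by rewrite /GRing.scale /= [M z i k * _]mulrC.
Qed.

Lemma derive_coord (z v : 'rV[R]_n) j :
  derivable (fun t : 'rV[R]_n => t ord0 j) z v /\
  'D_v (fun t : 'rV[R]_n => t ord0 j) z = v ord0 j.
Proof.
have di : derivable (@id 'rV[R]_n) z v by exact: derivable_id.
split; first exact: (proj1 (derivable_mxP _ _ _) di).
by have := derive_mx di; rewrite derive_id => /matrixP/(_ ord0 j); rewrite mxE => <-.
Qed.


Lemma derive_xc (x0 z v : 'rV[R]_n) j :
  derivable (fun t : 'rV[R]_n => xcoord (t - x0) j) z v /\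
  'D_v (fun t : 'rV[R]_n => xcoord (t - x0) j) z = v ord0 j.
Proof.
have -> : (fun t : 'rV[R]_n => xcoord (t - x0) j) =
   (fun t : 'rV[R]_n => t ord0 j) - cst (x0 ord0 j).
  by apply/funext => t; rewrite /xcoord !mxE.
have [d1 d2] := derive_coord z v j.
have dc : derivable (cst (x0 ord0 j) : 'rV[R]_n -> R) z v by exact: derivable_cst.
split; first exact: derivableB.
by rewrite deriveB // d2 derive_cst subr0.
Qed.

Lemma derive_scalec f (k : R) z v : derivable f z v ->
  derivable (fun z => k *: f z) z v /\ 'D_v (fun z => k *: f z) z = k *: 'D_v f z.
Proof.
move=> df.
have dc : derivable (cst k : 'rV[R]_n -> R) z v by exact: derivable_cst.
have [d1 d2] := deriveZfun (cst k) f z v dc df.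
split => //; rewrite d2 derive_cst scale0r addr0 //.
Qed.

Lemma lie_suml m (a : 'I_m -> R) (X : 'I_m -> 'M[R]_r) M :
  lie (\sum_(i < m) a i *: X i) M = \sum_(i < m) a i *: lie (X i) M.
Proof.
rewrite /lie mulmx_suml mulmx_sumr -sumrB; apply: eq_bigr => i _.
by rewrite -scalemxAl -scalemxAr scalerBr.
Qed.

Lemma lie_sumr m (a : 'I_m -> R) (X : 'I_m -> 'M[R]_r) M :
  lie M (\sum_(i < m) a i *: X i) = \sum_(i < m) a i *: lie M (X i).
Proof.
rewrite /lie mulmx_suml mulmx_sumr -sumrB; apply: eq_bigr => i _.
by rewrite -scalemxAl -scalemxAr scalerBr.
Qed.

End H.
Arguments pdE {R n r}. Arguments deriveZv {R n r}. Arguments line_const {R n r}.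
Arguments line_zero {R n r}. Arguments deriveZfun {R n r}. Arguments derive_xc {R n}.
Arguments derive_scalec {R n r}. Arguments lie_suml {R r}. Arguments lie_sumr {R r}.

Theorem mainTheorem12 (R : realType) (n r : nat) (G : set 'M[R]_r)
  (A : connection R n r) (x0 : 'rV[R]_n) (t0 : R) (V : 'rV[R]_n) :
  closed_subgroup_SO G ->
  (forall j x, lie_algebra G (A j x)) ->
  (forall j, smooth (A j)) ->
  0 < t0 ->
  shrinking_soliton A x0 t0 ->
  V != 0 ->
  (forall j x, interior_curv A V j x = 0) ->
  exponential_gauge A x0 ->
  (forall x, \sum_(j < n) xcoord V j *: A j x = 0) /\
  (forall (x : 'rV[R]_n) (c : R) (j : 'I_n), A j (x + c *: V) = A j x).
Proof.
move=> _ _ sm _ _ _ iV gauge.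
have dA : forall j z, differentiable (A j) z by move=> j z; exact: (sm j [::] z).
pose W := fun z : 'rV[R]_n => \sum_(j < n) xcoord V j *: A j z.
have Wsum : W = \sum_(j < n) (fun z => xcoord V j *: A j z) by rewrite fct_sumE.
have dW : forall z, differentiable W z.
  move=> z; rewrite Wsum; apply: differentiable_sum => i.
  have := differentiableZ (xcoord V i) (dA i z); exact.
have ga : forall (z v : 'rV[R]_n), \sum_(j < n) (v ord0 j *: A j z
                + xcoord (z - x0) j *: 'D_v (A j) z) = 0.
  move=> z v.
  have E0 : (fun z => \sum_(j < n) xcoord (z - x0) j *: A j z) =
            \sum_(j < n) (fun z => xcoord (z - x0) j *: A j z) by rewrite fct_sumE.
  have dT : forall j, derivable (fun z => xcoord (z - x0) j *: A j z) z v.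
    move=> j; have [d1 _] := derive_xc x0 z v j.
    exact: proj1 (deriveZfun (fun t : 'rV[R]_n => xcoord (t - x0) j) (A j) z v d1 (diff_derivable (v := v) (dA j z))).
  have : 'D_v (\sum_(j < n) (fun z => xcoord (z - x0) j *: A j z)) z = 0.
    rewrite -E0 (_ : (fun z => _) = cst 0); first exact: derive_cst.
    by apply/funext => t; exact: gauge.
  rewrite derive_sum // => H; rewrite -[in RHS]H; apply: eq_bigr => j _.
  have [d1 d2] := derive_xc x0 z v j.
  have [_ ->] := deriveZfun (fun t : 'rV[R]_n => xcoord (t - x0) j) (A j) z v d1 (diff_derivable (v := v) (dA j z)).
  by rewrite d2 addrC.
have gb : forall j z, 'D_V (A j) z - 'D_(ebasis j) W z + lie (W z) (A j z) = 0.
  move=> j z; rewrite -(iV j z) /interior_curv /curvature.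
  rewrite (pdE _ _ V (dA j z)) Wsum derive_sum; last first.
    move=> i; exact: (proj1 (derive_scalec (A i) (xcoord V i) z (ebasis j) (diff_derivable (dA i z)))).
  rewrite fct_sumE lie_suml -sumrB -big_split /=; apply: eq_bigr => i _.
  rewrite (proj2 (derive_scalec (A i) (xcoord V i) z (ebasis j) (diff_derivable (dA i z)))).
  rewrite !scalerDr !scalerN. reflexivity.
have gc : forall z, W z + 'D_(z - x0) W z = 0.
  move=> z.
  have S : \sum_(j < n) xcoord (z - x0) j *: 'D_V (A j) z
     - \sum_(j < n) xcoord (z - x0) j *: 'D_(ebasis j) W z
     + \sum_(j < n) xcoord (z - x0) j *: lie (W z) (A j z) = 0.
    rewrite -sumrB -big_split /= big1 // => j _.
    have := congr1 (fun M => xcoord (z - x0) j *: M) (gb j z).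
    by rewrite /= scaler0 !scalerDr scalerN.
  have S1 : \sum_(j < n) xcoord (z - x0) j *: 'D_V (A j) z = - W z.
    have := ga z V; rewrite big_split /= => /eqP; rewrite addrC addr_eq0 => /eqP ->.
    by [].
  have S2 : \sum_(j < n) xcoord (z - x0) j *: 'D_(ebasis j) W z = 'D_(z - x0) W z.
    by rewrite (pdE W z (z - x0) (dW z)).
  have S3 : \sum_(j < n) xcoord (z - x0) j *: lie (W z) (A j z) = 0.
    rewrite -lie_sumr (gauge z) /lie mulmx0 mul0mx subrr //.
  rewrite S1 S2 S3 addr0 in S.
  by apply/eqP; rewrite -oppr_eq0 opprD; apply/eqP.
have P1 : forall x, W x = 0.
  move=> x; have := line_zero W x0 (x - x0) dW.
  rewrite [x0 + _]addrC subrK; apply => s.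
  by have := gc (x0 + s *: (x - x0)); rewrite [x0 + _]addrC addrK.
split; first exact: P1.
move=> x c j; apply: (line_const (A j) x V (dA j)) => s.
have := gb j (x + s *: V).
have -> : W = cst 0 by apply/funext => t; exact: P1.
by rewrite derive_cst /= /lie mul0mx mulmx0 subrr subr0 addr0.
Qed.
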